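(* Let $\mathcal{H},\mathcal{K}$ be real or complex Hilbert spaces, let $S:\mathcal{H}\to\mathcal{K}$ and $T:\mathcal{K}\to\mathcal{H}$ be (not necessarily densely defined or closed) linear operators, and set $S_0:=S\cap T^*$ and $T_0:=T\cap S^*$. The following statements are equivalent: (i) $S$ and $T$ are both densely defined and $S^*=T$ and $T^*=S$; (ii) $\operatorname{ran}(I+T_0S_0)=\mathcal{H}$ and $\operatorname{ran}(I+S_0T_0)=\mathcal{K}$.
   Context: Operators are identified with their graphs (linear relations). For a linear relation $R\subset\mathcal{H}\times\mathcal{K}$ the adjoint is the linear relation $R^*=\{(k',h')\in\mathcal{K}\times\mathcal{H}:\langle k,k'\rangle=\langle h,h'\rangle\ \forall(h,k)\in R\}$, possibly multivalued if $R$ is not densely defined. $S\cap T^*$ is the intersection of the graph of $S$ with $T^*$; it is an operator $S_0$ with $\operatorname{dom} S_0\subset\operatorname{dom} S$, and similarly $T_0$. Products such as $T_0S_0$ are the usual compositions of operators on their natural domains, $I$ denotes the identity. *)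

(* Defs.v *)
From HB Require Import structures.
From mathcomp Require Import all_boot all_algebra.
From mathcomp Require Import reals.
From mathcomp.real_closed Require Export complex.
Export GRing.Theory Num.Theory.

Set Implicit Arguments.
Unset Strict Implicit.
Unset Printing Implicit Defensive.

Local Open Scope ring_scope.

(* Inner product spaces / Hilbert spaces over a scalar field F with a  *)
(* conjugation conj (conj = id for real spaces, conjC for complex).    *)

Definition is_inner_product (F : numFieldType) (conj : F -> F)
    (V : lmodType F) (ip : V -> V -> F) : Prop :=
  [/\ (forall (a : F) (x y z : V), ip (a *: x + y) z = a * ip x z + ip y z),
      (forall x y : V, ip y x = conj (ip x y)),
      (forall x : V, 0 <= ip x x) &
      (forall x : V, ip x x = 0 -> x = 0)].

Definition nrm2 (F : numFieldType) (V : lmodType F) (ip : V -> V -> F)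
  (x : V) : F := ip x x.

Definition ip_complete (F : numFieldType) (V : lmodType F)
    (ip : V -> V -> F) : Prop :=
  forall u : nat -> V,
    (forall e : F, 0 < e -> exists N : nat, forall m n : nat,
        (N <= m)%N -> (N <= n)%N -> nrm2 ip (u m - u n) < e) ->
    exists x : V, forall e : F, 0 < e -> exists N : nat, forall n : nat,
        (N <= n)%N -> nrm2 ip (u n - x) < e.

Definition is_hilbert (F : numFieldType) (conj : F -> F)
    (V : lmodType F) (ip : V -> V -> F) : Prop :=
  is_inner_product conj ip /\ ip_complete ip.

Definition linrel (V W : Type) := V -> W -> Prop.

Definition is_linear_relation (F : numFieldType) (V W : lmodType F)
    (R : linrel V W) : Prop :=
  R 0 0 /\
  (forall (a : F) (x y : V) (x' y' : W),
      R x x' -> R y y' -> R (a *: x + y) (a *: x' + y')).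

Definition is_operator (F : numFieldType) (V W : lmodType F)
    (R : linrel V W) : Prop :=
  is_linear_relation R /\ (forall w : W, R 0 w -> w = 0).

Definition adjoint (F : numFieldType) (V W : lmodType F)
    (ipV : V -> V -> F) (ipW : W -> W -> F) (R : linrel V W) : linrel W V :=
  fun k' h' => forall (h : V) (k : W), R h k -> ipW k k' = ipV h h'.

Definition rel_cap (V W : Type) (R1 R2 : linrel V W) : linrel V W :=
  fun v w => R1 v w /\ R2 v w.

Definition rel_eq (V W : Type) (R1 R2 : linrel V W) : Prop :=
  forall v w, R1 v w <-> R2 v w.

Definition dom (V W : Type) (R : linrel V W) : V -> Prop :=
  fun v => exists w, R v w.

Definition dense (F : numFieldType) (V : lmodType F) (ip : V -> V -> F)
    (A : V -> Prop) : Prop :=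
  forall (v : V) (e : F), 0 < e -> exists a, A a /\ nrm2 ip (v - a) < e.

Definition densely_defined (F : numFieldType) (V W : lmodType F)
    (ip : V -> V -> F) (R : linrel V W) : Prop :=
  dense ip (dom R).

(* range of I + B A, where A : V -> W and B : W -> V, with the product
   B A defined on its natural domain {v in dom A | A v in dom B}.      *)
Definition ran_I_plus_comp (F : numFieldType) (V W : lmodType F)
    (A : linrel V W) (B : linrel W V) : V -> Prop :=
  fun y => exists (h : V) (k : W) (h' : V), A h k /\ B k h' /\ y = h + h'.

(* Main.v *)
Require Import Defs.
From mathcomp Require Import all_boot all_order all_algebra.
From mathcomp Require Import reals.
From mathcomp.real_closed Require Import complex.
From mathcomp Require Import ring lra.
Import Order.LTheory GRing.Theory Num.Theory.
Set Implicit Arguments.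
Unset Strict Implicit.
Unset Printing Implicit Defensive.
Local Open Scope ring_scope.

Section Generic.
Variable F : numFieldType.
Variable conj : F -> F.
Hypothesis conjD : forall a b, conj (a + b) = conj a + conj b.
Hypothesis conjM : forall a b, conj (a * b) = conj a * conj b.
Hypothesis conjK : forall a, conj (conj a) = a.
Hypothesis conjN2 : forall a, a * conj a = `|a| ^+ 2.
Hypothesis conjV : forall a, conj (a^-1) = (conj a)^-1.
Hypothesis Finf : forall A : F -> Prop, (exists a, A a) ->
  (forall a, A a -> 0 <= a) ->
  exists d, [/\ 0 <= d, (forall a, A a -> d <= a) &
                        (forall e, 0 < e -> exists a, A a /\ a < d + e)].
Hypothesis Farch : forall e : F, 0 < e -> exists N : nat, (N.+1%:R)^-1 < e.

Definition eps (n : nat) : F := (n.+1%:R)^-1.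
Lemma eps_gt0 n : 0 < eps n.
Proof. by rewrite /eps invr_gt0 ltr0Sn. Qed.
Lemma eps_mono n N : (N <= n)%N -> eps n <= eps N.
Proof. by move=> h; rewrite /eps lef_pV2 ?posrE ?ltr0Sn // ler_nat ltnS. Qed.

Lemma conj0 : conj 0 = 0.
Proof.
have h := conjD 0 0; rewrite addr0 in h.
by apply/eqP; rewrite -(addrI _ (etrans (addr0 _) h)).
Qed.

Lemma conjNeg a : conj (- a) = - conj a.
Proof. by apply/eqP; rewrite -addr_eq0 -conjD addNr conj0. Qed.

Definition cc (z : F) := z * conj z.
Lemma cc_ge0 z : 0 <= cc z.
Proof. by rewrite /cc conjN2 exprn_ge0. Qed.
Lemma cc_eq0 z : cc z = 0 -> z = 0.
Proof. by rewrite /cc conjN2 => /eqP; rewrite expf_eq0 /= normr_eq0 => /eqP. Qed.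

Lemma small0 (x : F) : 0 <= x -> (forall e, 0 < e -> x < e) -> x = 0.
Proof.
move=> x0 h; apply/eqP; apply: contraT => nx.
have xp : 0 < x by rewrite lt_def nx x0.
by have := h x xp; rewrite ltxx.
Qed.

Lemma cc_small z : (forall e, 0 < e -> cc z < e) -> z = 0.
Proof. by move=> h; apply: cc_eq0; apply: small0 (cc_ge0 z) h. Qed.

Lemma ccD u w : cc (u + w) <= 2 * cc u + 2 * cc w.
Proof.
rewrite -subr_ge0.
have -> : 2 * cc u + 2 * cc w - cc (u + w) = cc (u - w).
  by rewrite /cc !conjD !conjNeg; ring.
exact: cc_ge0.
Qed.

Section IP.
Variable V : lmodType F.
Variable ip : V -> V -> F.
Hypothesis Hip : is_inner_product conj ip.

Lemma ipDZl a x y z : ip (a *: x + y) z = a * ip x z + ip y z.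
Proof. by case: Hip. Qed.
Lemma ipC x y : ip y x = conj (ip x y).
Proof. by case: Hip. Qed.
Lemma ip_ge0 x : 0 <= ip x x.
Proof. by case: Hip. Qed.
Lemma ip_eq0 x : ip x x = 0 -> x = 0.
Proof. by case: Hip => _ _ _; apply. Qed.

Lemma ip0l z : ip 0 z = 0.
Proof.
have h := ipDZl 1 0 0 z; rewrite scale1r addr0 mul1r in h.
by apply/eqP; rewrite -(addrI _ (etrans (addr0 _) h)).
Qed.
Lemma ipDl x y z : ip (x + y) z = ip x z + ip y z.
Proof. by rewrite -[x in LHS]scale1r ipDZl mul1r. Qed.
Lemma ipZl a x z : ip (a *: x) z = a * ip x z.
Proof. by rewrite -[_ *: _]addr0 ipDZl ip0l addr0. Qed.
Lemma ipNl x z : ip (- x) z = - ip x z.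
Proof. by rewrite -scaleN1r ipZl mulN1r. Qed.
Lemma ipBl x y z : ip (x - y) z = ip x z - ip y z.
Proof. by rewrite ipDl ipNl. Qed.
Lemma ip0r z : ip z 0 = 0.
Proof. by rewrite ipC ip0l conj0. Qed.
Lemma ipDr x y z : ip z (x + y) = ip z x + ip z y.
Proof. by rewrite ipC ipDl conjD -!ipC. Qed.
Lemma ipZr a x z : ip z (a *: x) = conj a * ip z x.
Proof. by rewrite ipC ipZl conjM -ipC. Qed.
Lemma ipNr x z : ip z (- x) = - ip z x.
Proof. by rewrite ipC ipNl conjNeg -ipC. Qed.
Lemma ipBr x y z : ip z (x - y) = ip z x - ip z y.
Proof. by rewrite ipDr ipNr. Qed.
Lemma ip_real x : conj (ip x x) = ip x x.
Proof. by rewrite -ipC. Qed.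

Lemma nrm2Z a x : nrm2 ip (a *: x) = `|a| ^+ 2 * nrm2 ip x.
Proof. by rewrite /nrm2 ipZl ipZr mulrA conjN2. Qed.
Lemma nrm2N x : nrm2 ip (- x) = nrm2 ip x.
Proof. by rewrite /nrm2 ipNl ipNr opprK. Qed.
Lemma nrm2B x y : nrm2 ip (x - y) = nrm2 ip (y - x).
Proof. by rewrite -nrm2N opprB. Qed.

Lemma key_eq x m : ip m m != 0 ->
  nrm2 ip (x - (ip x m / ip m m) *: m) = nrm2 ip x - cc (ip x m) / ip m m.
Proof.
move=> nz; rewrite /nrm2 /cc !ipBl !ipBr !ipZl !ipZr.
rewrite conjM conjV ip_real [ip m x]ipC.
set c := ip x m; set mu := ip m m.
by field.
Qed.

Lemma CS x m : cc (ip x m) <= nrm2 ip x * nrm2 ip m.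
Proof.
have [m0|nz] := eqVneq (ip m m) 0.
  by rewrite (ip_eq0 m0) ip0r /nrm2 ip0r mulr0 /cc mul0r.
have mp : 0 < ip m m by rewrite lt_def nz ip_ge0.
rewrite /nrm2 -ler_pdivrMr // -subr_ge0 -key_eq //; exact: ip_ge0.
Qed.

Lemma parallelogram x y :
  nrm2 ip (x + y) + nrm2 ip (x - y) = 2 * nrm2 ip x + 2 * nrm2 ip y.
Proof. by rewrite /nrm2 !ipDl !ipDr ?ipNl ?ipNr; ring. Qed.


Hypothesis Hc : ip_complete ip.

Lemma projection (M : V -> Prop) : M 0 ->
  (forall a x y, M x -> M y -> M (a *: x + y)) -> forall v,
  exists p, (forall e, 0 < e -> exists a, M a /\ nrm2 ip (p - a) < e) /\
            (forall m, M m -> ip m (v - p) = 0).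
Proof.
move=> M0 Mlin v.
have MD x y : M x -> M y -> M (x + y).
  by move=> hx hy; have := Mlin 1 x y hx hy; rewrite scale1r.
have MZ a x : M x -> M (a *: x).
  by move=> hx; have := Mlin a x 0 hx M0; rewrite addr0.
pose A r := exists a, M a /\ r = nrm2 ip (v - a).
have [d [d0 dlb dapp]] : exists d, [/\ 0 <= d, (forall a, A a -> d <= a) &
                        (forall e, 0 < e -> exists a, A a /\ a < d + e)].
  apply: Finf; first by exists (nrm2 ip (v - 0)), 0.
  by move=> a [x [_ ->]]; exact: ip_ge0.
have dlb' a : M a -> d <= nrm2 ip (v - a) by move=> ha; apply: dlb; exists a.
have : forall n, exists a, M a /\ nrm2 ip (v - a) < d + eps n.
  move=> n; have [r [[a [ha ->]] hr]] := dapp _ (eps_gt0 n).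
  by exists a.
case/boolp.choice => u hu.
have cauchy : forall e, 0 < e -> exists N : nat, forall m n : nat,
        (N <= m)%N -> (N <= n)%N -> nrm2 ip (u m - u n) < e.
  move=> e e0.
  have [N hN] := Farch (divr_gt0 e0 (ltr0Sn F 3)).
  exists N => m n hm hn.
  have [Mm lm] := hu m; have [Mn ln] := hu n.
  set w := (2%:R^-1 : F) *: (u m + u n).
  have Mw : M w by apply: MZ; apply: MD.
  have e2 : (v - u m) + (v - u n) = (2%:R : F) *: (v - w).
    rewrite scalerBr /w scalerA divff ?pnatr_eq0 // scale1r scaler_nat mulr2n.
    by rewrite addrACA opprD.
  have par := parallelogram (v - u m) (v - u n).
  have e3 : (v - u m) - (v - u n) = u n - u m by rewrite opprB addrC addrA subrK.
  rewrite e2 e3 nrm2Z (nrm2B (u n)) in par.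
  have -> : nrm2 ip (u m - u n) = 2 * nrm2 ip (v - u m) + 2 * nrm2 ip (v - u n)
      - `|2%:R| ^+ 2 * nrm2 ip (v - w) by rewrite -par addrAC subrr add0r.
  have h1 : `|2%:R| ^+ 2 * d <= `|2%:R| ^+ 2 * nrm2 ip (v - w :> V).
    by rewrite ler_pM2l ?exprn_gt0 ?normr_gt0 ?pnatr_eq0 //; apply: dlb'.
  have h2 : 2 * nrm2 ip (v - u m) + 2 * nrm2 ip (v - u n) <
            2 * (d + eps N) + 2 * (d + eps N).
    apply: ltrD; rewrite ltr_pM2l //.
      by apply: (lt_le_trans lm); rewrite lerD2l eps_mono.
    by apply: (lt_le_trans ln); rewrite lerD2l eps_mono.
  apply: (le_lt_trans (lerB (lexx _) h1)).
  apply: (lt_le_trans (ltr_leD h2 (lexx _))).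
  have -> : 2 * (d + eps N) + 2 * (d + eps N) - `|2%:R| ^+ 2 * d = eps N * 4%:R.
    by rewrite normr_nat; ring.
  by apply: ltW; rewrite -ltr_pdivlMr ?ltr0Sn.
have [p hp] := Hc cauchy.
exists p; split.
  move=> e e0; have [N hN] := hp e e0.
  by exists (u N); split; [case: (hu N) | rewrite nrm2B; apply: hN].
move=> m Mm.
have [m0|nz] := eqVneq (ip m m) 0.
  by rewrite (ip_eq0 m0) ip0l.
have mu0 : 0 < ip m m by rewrite lt_def nz ip_ge0.
rewrite ipC; suff -> : ip (v - p) m = 0 by rewrite conj0.
apply: cc_small => e e0.
have de0 : 0 < e / (4%:R * ip m m) by rewrite divr_gt0 // mulr_gt0 ?ltr0Sn.
have [N1 hN1] := Farch de0.
have [N2 hN2] := hp _ de0.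
set n := maxn N1 N2.
have [Mn ln] := hu n.
set c := ip (v - u n) m.
have hc : cc c < eps n * ip m m.
  have Mz : M (u n + (c / ip m m) *: m) by rewrite addrC; apply: Mlin.
  have := dlb' _ Mz.
  rewrite opprD addrA key_eq // => h.
  have h' : cc c / ip m m < eps n.
    have h2 : d + cc c / ip m m < d + eps n.
      by apply: le_lt_trans ln; rewrite -lerBrDr.
    by rewrite ltrD2l in h2.
  by rewrite -ltr_pdivrMr.
set dl := ip (u n - p) m.
have hdl : cc dl < e / (4%:R * ip m m) * ip m m.
  apply: (le_lt_trans (CS _ _)).
  by rewrite ltr_pM2r //; apply: hN2; rewrite leq_maxr.
have -> : v - p = (v - u n) + (u n - p) by rewrite addrA subrK.
rewrite ipDl.
apply: (le_lt_trans (ccD _ _)).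
have hen : eps n < e / (4%:R * ip m m).
  by apply: le_lt_trans hN1; apply: eps_mono; rewrite leq_maxl.
have : 2 * cc c + 2 * cc dl < 2 * (e / (4%:R * ip m m) * ip m m) +
                            2 * (e / (4%:R * ip m m) * ip m m).
  apply: ltrD; rewrite ltr_pM2l //.
  by apply: (lt_trans hc); rewrite ltr_pM2r.
have -> : 2 * (e / (4%:R * ip m m) * ip m m) + 2 * (e / (4%:R * ip m m) * ip m m)
   = e by field; rewrite nz /=.
by move=> h; exact: h.
Qed.


End IP.

Section Two.
Variables (H K : lmodType F) (ipH : H -> H -> F) (ipK : K -> K -> F).
Hypotheses (HH : is_inner_product conj ipH) (HK : is_inner_product conj ipK).
Hypotheses (Hc1 : ip_complete ipH) (Hc2 : ip_complete ipK).

Definition ipP (a b : (H * K)%type) : F := ipH a.1 b.1 + ipK a.2 b.2.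

Lemma prod_ip : is_inner_product conj ipP.
Proof.
split.
- move=> a x y z; rewrite /ipP /= !ipDZl //; ring.
- by move=> x y; rewrite /ipP conjD -!ipC.
- by move=> x; rewrite /ipP addr_ge0 ?ip_ge0.
- move=> [x1 x2] /eqP; rewrite /ipP /= paddr_eq0 ?ip_ge0 // => /andP[/eqP h1 /eqP h2].
  by rewrite (ip_eq0 HH h1) (ip_eq0 HK h2).
Qed.

Lemma prod_complete : ip_complete ipP.
Proof.
move=> u hu.
have c1 : forall e, 0 < e -> exists N : nat, forall m n : nat,
    (N <= m)%N -> (N <= n)%N -> nrm2 ipH ((u m).1 - (u n).1) < e.
  move=> e e0; have [N hN] := hu e e0; exists N => m n hm hn.
  apply: le_lt_trans (hN m n hm hn).
  by rewrite /nrm2 /ipP /= lerDl ip_ge0.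
have c2 : forall e, 0 < e -> exists N : nat, forall m n : nat,
    (N <= m)%N -> (N <= n)%N -> nrm2 ipK ((u m).2 - (u n).2) < e.
  move=> e e0; have [N hN] := hu e e0; exists N => m n hm hn.
  apply: le_lt_trans (hN m n hm hn).
  by rewrite /nrm2 /ipP /= lerDr ip_ge0.
have [x1 hx1] := Hc1 c1; have [x2 hx2] := Hc2 c2.
exists (x1, x2) => e e0.
have e20 : 0 < e / 2 by rewrite divr_gt0.
have [N1 h1] := hx1 _ e20; have [N2 h2] := hx2 _ e20.
exists (maxn N1 N2) => n hn.
rewrite /nrm2 /ipP /=.
rewrite [e](splitr e); apply: ltrD.
  by apply: h1; apply: leq_trans hn; rewrite leq_maxl.
by apply: h2; apply: leq_trans hn; rewrite leq_maxr.
Qed.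

Lemma ccN z : cc (- z) = cc z.
Proof. by rewrite /cc conjNeg mulrNN. Qed.

Lemma i2ii (S : linrel H K) (T : linrel K H) :
  is_linear_relation S ->
  rel_eq (adjoint ipK ipH T) S -> rel_eq (adjoint ipH ipK S) T ->
  forall h, ran_I_plus_comp (rel_cap S (adjoint ipK ipH T))
                            (rel_cap T (adjoint ipH ipK S)) h.
Proof.
move=> [S00 Slin] hS hT h.
pose M (z : (H * K)%type) := S z.1 z.2.
have M0 : M 0 by [].
have Mlin : forall a x y, M x -> M y -> M (a *: x + y).
  by move=> a x y; apply: Slin.
have [[x y] [hcl horth]] := projection prod_ip prod_complete M0 Mlin (h, 0).
have Sxy : S x y.
  apply: (hS x y).1 => c d Tcd.
  apply/eqP; rewrite -subr_eq0; apply/eqP; apply: cc_small => e e0.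
  set Cd := nrm2 ipH d; set Cc := nrm2 ipK c.
  have C0 : 0 < 2 * (Cd + Cc + 1).
    by rewrite mulr_gt0 // ltr_pwDr // addr_ge0 // ip_ge0.
  have [[a b] [Mab hab]] := hcl _ (divr_gt0 e0 C0).
  have hab' : ipH d a = ipK c b by apply: (hS a b).2.
  rewrite /nrm2 /ipP /= in hab.
  have -> : ipH d x - ipK c y = ipH d (x - a) + - ipK c (y - b).
    by rewrite (ipBr HH) (ipBr HK) hab'; ring.
  apply: (le_lt_trans (ccD _ _)); rewrite ccN.
  apply: (le_lt_trans (lerD (ler_wpM2l _ (CS HH _ _)) (ler_wpM2l _ (CS HK _ _)))) => //.
  set P1 := nrm2 ipH (x - a); set P2 := nrm2 ipK (y - b).
  have P10 : 0 <= P1 by apply: ip_ge0.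
  have P20 : 0 <= P2 by apply: ip_ge0.
  apply: (@le_lt_trans _ _ (2 * (Cd + Cc + 1) * (P1 + P2))).
    have Cd0 : 0 <= Cd by apply: ip_ge0.
    have Cc0 : 0 <= Cc by apply: ip_ge0.
    rewrite -subr_ge0.
    have -> : 2 * (Cd + Cc + 1) * (P1 + P2) - (2 * (Cd * P1) + 2 * (Cc * P2))
      = 2 * (Cd * P2 + Cc * P1 + P1 + P2) by ring.
    by rewrite mulr_ge0 // !addr_ge0 // mulr_ge0.
  by rewrite -ltr_pdivlMl // mulrC.
exists x, y, (h - x); split; last split.
- by split => //; apply: (hS x y).2.
- have hS' : adjoint ipH ipK S y (h - x).
    move=> a b Sab.
    have := horth (a, b) Sab; rewrite /ipP /= sub0r (ipNr HK) => /eqP.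
    by rewrite subr_eq0 => /eqP.
  by split => //; apply: (hT y (h - x)).1.
- by rewrite addrC subrK.
Qed.


Lemma AP (A : linrel H K) (B : linrel K H) :
  is_linear_relation A -> is_linear_relation B -> (forall w, B 0 w -> w = 0) ->
  (forall x y k h, A x y -> B k h -> ipK y k = ipH x h) ->
  (forall h, ran_I_plus_comp A B h) -> (forall k, ran_I_plus_comp B A k) ->
  (forall k h', adjoint ipH ipK A k h' -> B k h') /\ densely_defined ipH A.
Proof.
move=> [A00 Alin] [B00 Blin] Bop pair rAB rBA.
have part1 : forall k h', adjoint ipH ipK A k h' -> B k h'.
  move=> k h' hadj.
  have [x1 [y1 [h1 [A1 [B1 e1]]]]] := rAB (- h').
  have [y [h2 [k2 [B2 [A2 e2]]]]] := rBA k.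
  have [x [Ax [z [Bz [hA hB ex ez]]]]] : exists x Ax z Bz,
      [/\ A x Ax, B z Bz, - h' = x - Bz & k = Ax + z].
    exists (x1 + h2), (y1 + k2), (y - y1), (h2 - h1); split.
    - by have := Alin 1 x1 h2 y1 k2 A1 A2; rewrite !scale1r.
    - have := Blin (-1) y1 y h1 h2 B1 B2; rewrite !scaleN1r.
      by rewrite [- y1 + y]addrC [- h1 + h2]addrC.
    - by rewrite e1 opprB addrA addrAC addrK.
    - by rewrite e2 [RHS]addrC addrA subrK.
  have eh : h' = Bz - x by rewrite -[h']opprK ex opprB.
  have h0 : ipH x x + ipK Ax Ax = 0.
    have := hadj x Ax hA; rewrite ez eh (ipDr HK) (ipBr HH) (pair x Ax z Bz hA hB).
    move=> /eqP; rewrite -subr_eq0 => /eqP <-; ring.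
  move/eqP: h0; rewrite paddr_eq0 ?ip_ge0 // => /andP[/eqP hx /eqP hAx].
  have x0 := ip_eq0 HH hx; have Ax0 := ip_eq0 HK hAx.
  by rewrite ez eh x0 Ax0 add0r subr0.
split => // v e e0.
pose M := dom A.
have M0 : M 0 by exists 0.
have Mlin : forall a x y, M x -> M y -> M (a *: x + y).
  by move=> a x y [x' hx] [y' hy]; exists (a *: x' + y'); apply: Alin.
have [p [hcl horth]] := projection HH Hc1 M0 Mlin v.
have pv : v - p = 0.
  apply: Bop; apply: part1 => x y Axy.
  by rewrite (ip0r HK) horth //; exists y.
have -> : v = p by apply/eqP; rewrite -subr_eq0 pv.
exact: hcl.
Qed.

End Two.

Section Rel.
Variables (V W : lmodType F) (ipV : V -> V -> F) (ipW : W -> W -> F).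
Hypotheses (HV : is_inner_product conj ipV) (HW : is_inner_product conj ipW).

Lemma adj_anti (R1 R2 : linrel V W) : (forall x y, R1 x y -> R2 x y) ->
  forall k h, adjoint ipV ipW R2 k h -> adjoint ipV ipW R1 k h.
Proof. by move=> h12 k h hA x y /h12; apply: hA. Qed.

Lemma bidual (R : linrel V W) x y : R x y ->
  adjoint ipW ipV (adjoint ipV ipW R) x y.
Proof.
move=> Rxy k' h' hA.
by rewrite (ipC HV) (ipC HW) (hA x y Rxy).
Qed.

Lemma adj_lin (R : linrel V W) : is_linear_relation (adjoint ipV ipW R).
Proof.
split.
  by move=> h k _; rewrite (ip0r HV) (ip0r HW).
move=> a x y x' y' hx hy h k Rhk.
by rewrite (ipDr HW) (ipZr HW) (ipDr HV) (ipZr HV) (hx h k Rhk) (hy h k Rhk).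
Qed.

Lemma cap_lin (R1 R2 : linrel V W) : is_linear_relation R1 ->
  is_linear_relation R2 -> is_linear_relation (rel_cap R1 R2).
Proof.
move=> [a0 al] [b0 bl]; split; first by [].
by move=> a x y x' y' [h1 h2] [h3 h4]; split; [apply: al | apply: bl].
Qed.
End Rel.

Lemma L3 (H K : lmodType F) (ipH : H -> H -> F) (ipK : K -> K -> F)
  (HH : is_inner_product conj ipH) (HK : is_inner_product conj ipK)
  (S : linrel H K) (T : linrel K H) :
  let S0 := rel_cap S (adjoint ipK ipH T) in
  let T0 := rel_cap T (adjoint ipH ipK S) in
  (forall k h, adjoint ipH ipK S0 k h -> T0 k h) ->
  rel_eq (adjoint ipH ipK S) T.
Proof.
move=> S0 T0 hS0 k h; split.
  move=> hA; case: (hS0 k h) => //.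
  by apply: adj_anti hA => x y [].
move=> Tkh; case: (hS0 k h) => //.
apply: (adj_anti (R2 := adjoint ipK ipH T)); first by move=> x y [].
exact: bidual.
Qed.

Theorem main_gen (H K : lmodType F) (ipH : H -> H -> F) (ipK : K -> K -> F)
          (S : linrel H K) (T : linrel K H) :
     is_hilbert conj ipH -> is_hilbert conj ipK ->
     is_operator S -> is_operator T ->
     let S0 := rel_cap S (adjoint ipK ipH T) in
     let T0 := rel_cap T (adjoint ipH ipK S) in
     ([/\ densely_defined ipH S, densely_defined ipK T,
          rel_eq (adjoint ipH ipK S) T & rel_eq (adjoint ipK ipH T) S]
      <->
      ((forall h : H, ran_I_plus_comp S0 T0 h) /\
       (forall k : K, ran_I_plus_comp T0 S0 k))).
Proof.
move=> [HH Hc1] [HK Hc2] [Slin Sop] [Tlin Top] S0 T0; split.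
  case=> _ _ hS hT; split.
    exact: (i2ii HH HK Hc1 Hc2 Slin hT hS).
  exact: (i2ii HK HH Hc2 Hc1 Tlin hS hT).
case=> r1 r2.
have S0lin : is_linear_relation S0 by apply: cap_lin => //; apply: adj_lin.
have T0lin : is_linear_relation T0 by apply: cap_lin => //; apply: adj_lin.
have S0op : forall w, S0 0 w -> w = 0 by move=> w [/Sop].
have T0op : forall w, T0 0 w -> w = 0 by move=> w [/Top].
have pair1 : forall x y k h, S0 x y -> T0 k h -> ipK y k = ipH x h.
  move=> x y k h [_ hx] [Tkh _].
  by rewrite (ipC HH) (hx k h Tkh) -(ipC HK).
have pair2 : forall k h x y, T0 k h -> S0 x y -> ipH h x = ipK k y.
  by move=> k h x y [Tkh _] [_ hx]; apply: hx.
have [adS0 dS0] := AP HH HK Hc1 S0lin T0lin T0op pair1 r1 r2.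
have [adT0 dT0] := AP HK HH Hc2 T0lin S0lin S0op pair2 r2 r1.
split.
- move=> v e e0; have [a [[b [Sab _]] ha]] := dS0 v e e0.
  by exists a; split => //; exists b.
- move=> v e e0; have [a [[b [Sab _]] ha]] := dT0 v e e0.
  by exists a; split => //; exists b.
- exact: (L3 HH HK adS0).
- exact: (L3 HK HH adT0).
Qed.

End Generic.

Lemma Rinf (R : realType) (A : R -> Prop) : (exists a, A a) ->
  (forall a, A a -> 0 <= a) ->
  exists d : R, [/\ 0 <= d, (forall a, A a -> d <= a) &
     (forall e, 0 < e -> exists a, A a /\ a < d + e)].
Proof.
move=> [a0 ha0] hge.
have hinf : classical_sets.has_inf A.
  by split; [exists a0 | exists 0 => y /hge].
exists (inf A); split.
- by apply: lb_le_inf; [exists a0 | move=> y /hge].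
- by move=> a ha; apply: ge_inf => //; exists 0 => y /hge.
- move=> e e0; have [a ha hlt] := inf_adherent e0 hinf.
  by exists a.
Qed.

Lemma Rarch (R : realType) (e : R) : 0 < e -> exists N : nat, (N.+1%:R)^-1 < e.
Proof.
move=> e0.
have ei : 0 <= e^-1 by rewrite invr_ge0 ltW.
have h := archi_boundP ei.
exists (Num.Def.archi_bound e^-1).
rewrite -[X in _ < X]invrK ltf_pV2 ?posrE ?ltr0Sn ?invr_gt0 //.
by apply: (lt_trans h); rewrite ltr_nat ltnSn.
Qed.

Section CX.
Local Open Scope complex_scope.
Lemma ge0_real (R : realType) (a : R[i]) : 0 <= a -> a = (complex.Re a)%:C /\ (0 <= complex.Re a)%R.
Proof. by case: a => ra ia; rewrite lecE /= => /andP[/eqP -> h]. Qed.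
Lemma gt0_real (R : realType) (a : R[i]) : 0 < a -> a = (complex.Re a)%:C /\ (0 < complex.Re a)%R.
Proof. by case: a => ra ia; rewrite ltcE /= => /andP[/eqP -> h]. Qed.

Lemma Cinf (R : realType) (A : R[i] -> Prop) : (exists a, A a) ->
  (forall a, A a -> 0 <= a) ->
  exists d : R[i], [/\ 0 <= d, (forall a, A a -> d <= a) &
     (forall e, 0 < e -> exists a, A a /\ a < d + e)].
Proof.
move=> [a0 ha0] hge.
have [ea0 _] := @ge0_real _ _ (hge _ ha0).
have ne : exists r : R, A r%:C by exists (complex.Re a0); rewrite -ea0.
have nn : forall r : R, A r%:C -> (0 <= r)%R.
  by move=> r hr; move: (hge _ hr); rewrite ler0c.
have [d [d0 dlb dapp]] := @Rinf R (fun r : R => A r%:C) ne nn.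
exists d%:C; split.
- by rewrite ler0c.
- move=> a ha; have [ea _] := @ge0_real _ _ (hge _ ha).
  by rewrite ea lecR; apply: dlb; rewrite -ea.
- move=> e e0; have [ee ep] := @gt0_real _ _ e0.
  have [r [hr hlt]] := dapp _ ep.
  by exists r%:C; split => //; rewrite ee -rmorphD ltcR.
Qed.

Lemma Carch (R : realType) (e : R[i]) : 0 < e -> exists N : nat, (N.+1%:R)^-1 < e.
Proof.
move=> e0; have [ee ep] := @gt0_real _ _ e0.
have [N hN] := @Rarch _ _ ep.
exists N; rewrite ee.
have -> : (N.+1%:R : R[i])^-1 = ((N.+1%:R : R)^-1)%:C by rewrite fmorphV rmorph_nat.
by rewrite ltcR.
Qed.

End CX.

Theorem theorem3p9 (R : realType) :
  (forall (H K : lmodType R) (ipH : H -> H -> R) (ipK : K -> K -> R)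
          (S : linrel H K) (T : linrel K H),
     is_hilbert (@idfun R) ipH -> is_hilbert (@idfun R) ipK ->
     is_operator S -> is_operator T ->
     let S0 := rel_cap S (adjoint ipK ipH T) in
     let T0 := rel_cap T (adjoint ipH ipK S) in
     ([/\ densely_defined ipH S, densely_defined ipK T,
          rel_eq (adjoint ipH ipK S) T & rel_eq (adjoint ipK ipH T) S]
      <->
      ((forall h : H, ran_I_plus_comp S0 T0 h) /\
       (forall k : K, ran_I_plus_comp T0 S0 k))))
  /\
  (forall (H K : lmodType R[i]) (ipH : H -> H -> R[i]) (ipK : K -> K -> R[i])
          (S : linrel H K) (T : linrel K H),
     is_hilbert (@Num.conj R[i]) ipH -> is_hilbert (@Num.conj R[i]) ipK ->
     is_operator S -> is_operator T ->
     let S0 := rel_cap S (adjoint ipK ipH T) in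
     let T0 := rel_cap T (adjoint ipH ipK S) in
     ([/\ densely_defined ipH S, densely_defined ipK T,
          rel_eq (adjoint ipH ipK S) T & rel_eq (adjoint ipK ipH T) S]
      <->
      ((forall h : H, ran_I_plus_comp S0 T0 h) /\
       (forall k : K, ran_I_plus_comp T0 S0 k)))).
Proof.
split.
- move=> H K ipH ipK S T.
  have hN2 : forall a : R, a * idfun a = `|a| ^+ 2 by move=> a; rewrite /= real_normK ?num_real // expr2.
  exact: (@main_gen R (@idfun R) (fun _ _ => erefl) (fun _ _ => erefl) hN2
            (fun _ => erefl) (@Rinf R) (@Rarch R) H K ipH ipK S T).
- move=> H K ipH ipK S T.
  have cD : forall a b : R[i], Num.conj (a + b) = Num.conj a + Num.conj b.
    by move=> a b; rewrite rmorphD.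
  have cM : forall a b : R[i], Num.conj (a * b) = Num.conj a * Num.conj b.
    by move=> a b; rewrite rmorphM.
  have cN2 : forall a : R[i], a * Num.conj a = `|a| ^+ 2.
    by move=> a; rewrite normCK.
  have cV : forall a : R[i], Num.conj (a^-1) = (Num.conj a)^-1.
    by move=> a; rewrite fmorphV.
  exact: (@main_gen R[i] (@Num.conj R[i]) cD cM cN2 cV (@Cinf R) (@Carch R)
            H K ipH ipK S T).
Qed.
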